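(* Let $(n_2,n_3,\dots)$ be the $\{0,1\}$-valued random sequence defined below, and for $N\ge 2$ let $\rho(n_2,\dots,n_N)$ be the joint law of $(n_2,\dots,n_N)$ and $$\hat\rho(z_2,\dots,z_N)=\sum_{n_2,\dots,n_N\in\{0,1\}} z_2^{n_2}\cdots z_N^{n_N}\rho(n_2,\dots,n_N)$$ its generating function. Write $\alpha_i=1-1/i$. Then for every $N\ge 3$, $$\hat\rho(z_2,\dots,z_N)=\hat\rho(z_2,\dots,z_{N-1})+(z_N-1)\,\hat\rho\left(z_2\alpha_2,\dots,z_{\lfloor\sqrt N\rfloor}\alpha_{\lfloor\sqrt N\rfloor},z_{\lfloor\sqrt N\rfloor+1},\dots,z_{N-1}\right),$$ and the probability $P_N=\Pr(n_N=1)$ satisfies $P_N=\hat\rho\left(\alpha_2,\dots,\alpha_{\lfloor\sqrt N\rfloor}\right)$ (the generating function of $(n_2,\dots,n_{\lfloor\sqrt N\rfloor})$ evaluated at these arguments).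
   Context: The random sequence models ''random primes'': $n_2=1$ almost surely, and for each $N\ge 3$, conditionally on $(n_2,\dots,n_{N-1})$, one has $n_N=1$ with probability $\prod_{i=2}^{\lfloor\sqrt N\rfloor}(1-1/i)^{n_i}$ and $n_N=0$ otherwise. (Interpretation: $n_k=1$ means $k$ is declared prime; $N$ is declared prime iff it fails to connect to each earlier declared prime $i\le\sqrt N$, connections occurring independently with probability $1/i$.) *)

(* Defs.v *)
From mathcomp Require Import all_boot all_order all_algebra.
Set Implicit Arguments. Unset Strict Implicit. Unset Printing Implicit Defensive.
Import Order.TTheory GRing.Theory Num.Theory.
Local Open Scope ring_scope.

Definition isqrt (N : nat) : nat := (\max_(m < N.+1 | (m * m <= N)%N) m)%N.

Section RandomPrimes.
Variable R : numFieldType.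

Definition alpha (i : nat) : R := 1 - (i%:R)^-1.

(* conditional probability that n_k = 1 given the earlier values n_2..n_{k-1}
   (n_2 = 1 almost surely) *)
Definition condp (n : nat -> bool) (k : nat) : R :=
  if k == 2%N then 1 else \prod_(2 <= i < (isqrt k).+1) alpha i ^+ n i.

Definition rho (N : nat) (n : nat -> bool) : R :=
  \prod_(2 <= k < N.+1) (if n k then condp n k else 1 - condp n k).

(* a configuration (n_2,...,n_N) encoded by a tuple t of length N-1: n_k = t_(k-2) *)
Definition cfg (N : nat) (t : (N.-1).-tuple bool) : nat -> bool :=
  fun k => nth false t (k - 2).

Definition rhohat (N : nat) (z : nat -> R) : R :=
  \sum_(t : (N.-1).-tuple bool)
     (\prod_(2 <= k < N.+1) z k ^+ cfg t k) * rho N (cfg t).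

Definition probP (N : nat) : R :=
  \sum_(t : (N.-1).-tuple bool) (if cfg t N then rho N (cfg t) else 0).

End RandomPrimes.

(* Main.v *)
Require Import Defs.
From mathcomp Require Import all_boot all_order all_algebra.
From mathcomp Require Import zify ring.
Import Order.TTheory GRing.Theory Num.Theory.
Local Open Scope ring_scope.

Lemma tk_size n (t : (n.+1).-tuple bool) : size (take n t) == n.
Proof. by rewrite size_take size_tuple ltnSn. Qed.

Definition tk n (t : (n.+1).-tuple bool) : n.-tuple bool := @Tuple n bool _ (@tk_size n t).
Arguments tk {n}.

Lemma sum_rcons (R : numFieldType) n (F : (n.+1).-tuple bool -> R) :
  \sum_(t : (n.+1).-tuple bool) F t =
  \sum_(t : n.-tuple bool) (F (rcons_tuple t false) + F (rcons_tuple t true)).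
Proof.
rewrite (reindex (fun p : n.-tuple bool * bool => rcons_tuple p.1 p.2)) /=.
  rewrite -(pair_big xpredT xpredT (fun a b => F (rcons_tuple a b))) /=.
  by apply: eq_bigr => t _; rewrite big_bool /= addrC.
exists (fun t => (tk t, nth false t n)).
  move=> [t b] _ /=; congr pair; last by rewrite nth_rcons size_tuple ltnn eqxx.
  apply: val_inj => /=.
  by rewrite -cats1 take_size_cat // size_tuple.
move=> t _; apply: val_inj => /=.
by rewrite -take_nth ?size_tuple // take_oversize // size_tuple.
Qed.

Lemma isqrt_ge1 k : (1 <= k)%N -> (1 <= isqrt k)%N.
Proof.
move=> hk; rewrite /isqrt.
have h1 : (1 < k.+1)%N by [].
exact: (@leq_bigmax_cond _ (fun m : 'I_k.+1 => (m * m <= k)%N) (fun m => nat_of_ord m) (Ordinal h1)).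
Qed.

Lemma isqrt_lt k : (2 <= k)%N -> (isqrt k <= k.-1)%N.
Proof.
move=> hk; rewrite /isqrt; apply/bigmax_leqP => i hi.
have hi' : (i <= k)%N by rewrite -ltnS; exact: ltn_ord.
move: hi hi' hk; move: (nat_of_ord i) => j; nia.
Qed.

Lemma isqrt_le k : (isqrt k <= k)%N.
Proof. by rewrite /isqrt; apply/bigmax_leqP => i _; rewrite -ltnS. Qed.

Lemma condp_ext (R : numFieldType) n n' k :
  (forall i, (2 <= i <= isqrt k)%N -> n i = n' i) -> condp R n k = condp R n' k.
Proof.
move=> h; rewrite /condp; case: (k == 2)%N => //.
by apply: eq_big_nat => i /andP [a b]; rewrite h // a -ltnS b.
Qed.

Lemma rho_ext (R : numFieldType) L n n' :
  (forall k, (2 <= k <= L)%N -> n k = n' k) -> rho R L n = rho R L n'.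
Proof.
move=> h; apply: eq_big_nat => k /andP [a b].
rewrite ltnS in b.
rewrite h ?a ?b // (@condp_ext R n n') //.
move=> i /andP [c d]; apply: h; rewrite c /=.
by apply: leq_trans b; apply: leq_trans d (isqrt_le _).
Qed.

Lemma cfg_rcons n (t : n.-tuple bool) b k :
  (2 <= k <= n.+1)%N -> @cfg (n.+2) (rcons_tuple t b) k = @cfg n.+1 t k.
Proof.
move=> /andP [a c]; rewrite /cfg /= nth_rcons size_tuple.
by have -> : (k - 2 < n)%N by lia.
Qed.

Lemma cfg_last n (t : n.-tuple bool) b :
  @cfg (n.+2) (rcons_tuple t b) n.+2 = b.
Proof. by rewrite /cfg /= nth_rcons size_tuple subn2 /= ltnn eqxx. Qed.

Lemma rho_step (R : numFieldType) n (t : n.-tuple bool) b :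
  rho R n.+2 (@cfg n.+2 (rcons_tuple t b)) =
  rho R n.+1 (@cfg n.+1 t) *
  (if b then condp R (@cfg n.+1 t) n.+2 else 1 - condp R (@cfg n.+1 t) n.+2).
Proof.
have ec : condp R (@cfg n.+2 (rcons_tuple t b)) n.+2 = condp R (@cfg n.+1 t) n.+2.
  apply: condp_ext => i /andP [a c]; apply: cfg_rcons; rewrite a /=.
  exact: (leq_trans c (@isqrt_lt n.+2 isT)).
rewrite [in LHS]/rho big_nat_recr //= cfg_last ec.
congr (_ * _).
transitivity (rho R n.+1 (@cfg n.+2 (rcons_tuple t b))); first by [].
apply: rho_ext => k hk; exact: cfg_rcons.
Qed.

Lemma step_sum (R : numFieldType) n (t : n.-tuple bool) (F : bool -> R) :
  \sum_(b : bool) F b * rho R n.+2 (@cfg n.+2 (rcons_tuple t b)) =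
  rho R n.+1 (@cfg n.+1 t) * (F false + (F true - F false) * condp R (@cfg n.+1 t) n.+2).
Proof. rewrite big_bool /= !rho_step; ring. Qed.

Lemma marg (R : numFieldType) M (G : (nat -> bool) -> R)
  (HG : forall n n', (forall k, (2 <= k <= M)%N -> n k = n' k) -> G n = G n') :
  forall L, (1 <= M <= L)%N ->
  \sum_(t : (L.-1).-tuple bool) G (@cfg L t) * rho R L (@cfg L t) =
  \sum_(t : (M.-1).-tuple bool) G (@cfg M t) * rho R M (@cfg M t).
Proof.
elim=> [|L IH]; first by case: M {HG}.
move=> /andP [h1 h2]; rewrite leq_eqVlt in h2; case/orP: h2 => [/eqP -> //|h2].
rewrite ltnS in h2.
case: L IH h2 => [|l] IH h2; first by case: M h1 h2 {HG IH}.
rewrite -IH ?h1 // sum_rcons /=.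
apply: eq_bigr => t _.
have eG : forall b, G (@cfg l.+2 (rcons_tuple t b)) = G (@cfg l.+1 t).
  move=> b; apply: HG => k /andP [a c]; apply: cfg_rcons; rewrite a /=.
  exact: leq_trans c h2.
rewrite !eG !rho_step; ring.
Qed.

Theorem mainTheorem12 (R : numFieldType) (N : nat) (HN : (3 <= N)%N) :
  (forall z : nat -> R,
     rhohat N z =
       rhohat N.-1 z +
       (z N - 1) * rhohat N.-1 (fun i => if (i <= isqrt N)%N then z i * alpha R i else z i))
  /\ probP R N = rhohat (isqrt N) (alpha R).
Proof.
case: N HN => [|[|[|m]]] // _.
set M := isqrt m.+3.
have hM1 : (1 <= M)%N by exact: isqrt_ge1.
have hM2 : (M <= m.+2)%N by exact: (@isqrt_lt m.+3 isT).
have ec : forall t : m.+1.-tuple bool,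
  condp R (@cfg m.+2 t) m.+3 = \prod_(2 <= i < M.+1) alpha R i ^+ @cfg m.+2 t i by [].
split.
  move=> z; rewrite /rhohat /= sum_rcons mulr_sumr -big_split /=.
  apply: eq_bigr => t _.
  have eP : forall b, \prod_(2 <= k < m.+4) z k ^+ @cfg m.+3 (rcons_tuple t b) k =
      (\prod_(2 <= k < m.+3) z k ^+ @cfg m.+2 t k) * z m.+3 ^+ b.
    move=> b; rewrite big_nat_recr //= cfg_last; congr (_ * _).
    apply: eq_big_nat => k /andP [a c]; rewrite cfg_rcons // a /=.
    by rewrite -ltnS.
  have eP' : \prod_(2 <= k < m.+3)
       (if (k <= M)%N then z k * alpha R k else z k) ^+ @cfg m.+2 t k =
     (\prod_(2 <= k < m.+3) z k ^+ @cfg m.+2 t k) * condp R (@cfg m.+2 t) m.+3.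
    rewrite ec (big_nat_widen 2 M.+1 m.+3 xpredT) // [X in _ * X]big_mkcond -big_split /=.
    apply: eq_bigr => k _; rewrite ltnS; case: (k <= M)%N; last by rewrite mulr1.
    by rewrite exprMn.
  rewrite !eP !rho_step eP' /=; ring.
rewrite /probP /= sum_rcons /=.
rewrite (eq_bigr (fun t : m.+1.-tuple bool =>
   (\prod_(2 <= i < M.+1) alpha R i ^+ @cfg m.+2 t i) * rho R m.+2 (@cfg m.+2 t))); last first.
  move=> t _; rewrite !cfg_last add0r rho_step ec mulrC //.
rewrite /rhohat.
have HG : forall n n' : nat -> bool, (forall k, (2 <= k <= M)%N -> n k = n' k) ->
  \prod_(2 <= i < M.+1) alpha R i ^+ n i = \prod_(2 <= i < M.+1) alpha R i ^+ n' i.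
  by move=> n n' h; apply: eq_big_nat => i /andP [a c]; rewrite h // a -ltnS c.
have := @marg R M _ HG m.+2; rewrite hM1 hM2 => /(_ isT) <-.
by [].
Qed.
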